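(* Let $A,B$ be closed linear relations in $X^2$ such that $\{A,B\}$ is a dual pair with $(A^* )_s|_{D(B)}=B_s$ and $(B^* )_s|_{D(A)}=A_s$. Then $$D(A^* )=D(B)\oplus_A N(1+B^*A^* ),\qquad D(B^* )=D(A)\oplus_B N(1+A^*B^* ).$$ In particular, if $A^*=B$ (equivalently $A=B^*$), then $N(1+B^*A^* )=\{0\}$ (equivalently $N(1+A^*B^* )=\{0\}$).
   Context: $X$ is a complex Hilbert space; $X^2=X\times X$ with the product inner product. A linear relation is a linear subspace $T\subset X^2$; $D(T)$, $N(T)=\{x:(x,0)\in T\}$, $T(x)=\{y:(x,y)\in T\}$ as usual. Adjoint: $T^*=\{(f,g):\langle g,x\rangle=\langle f,y\rangle\ \forall (x,y)\in T\}$. For closed $T$: $T_\infty=\{(0,y)\in T\}$, $T_s=T\ominus T_\infty$ is an operator with $D(T_s)=D(T)$, $R(T_s)\subset T(0)^\perp$. A pair of closed relations $\{A,B\}$ is a dual pair if $A\subset B^*$ (equivalently $B\subset A^*$). Product of relations: $CT=\{(x,z):(x,y)\in T,(y,z)\in C\text{ for some }y\}$; $1+T=\{(x,x+y):(x,y)\in T\}$, so $N(1+B^*A^* )=\{g:(g,-g)\in B^*A^*\}$. $X_{+A}$ is $D(A^* )$ with inner product $\langle f,g\rangle_{+A}=\langle f,g\rangle+\langle (A^* )_s f,(A^* )_s g\rangle$ (a Hilbert space), and $\oplus_A$ denotes orthogonal sum in $X_{+A}$; similarly $X_{+B}$, $\oplus_B$ with $B$ in place of $A$. *)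

(* Defs.v *)
From mathcomp Require Import all_boot all_order all_algebra complex.
From mathcomp Require Import classical_sets reals.
Set Implicit Arguments. Unset Strict Implicit. Unset Printing Implicit Defensive.
Import Order.TTheory GRing.Theory Num.Theory.
Local Open Scope ring_scope.
Local Open Scope classical_set_scope.

Section Hilbert.
Variables (R : realType) (X : lmodType R[i]) (ip : X -> X -> R[i]).

Definition nsq (x : X) : R := complex.Re (ip x x).

Definition conv_to (u : nat -> X) (x : X) : Prop :=
  forall e : R, 0 < e -> exists N : nat, forall n : nat, (N <= n)%N -> nsq (u n - x) < e.

Definition cauchy (u : nat -> X) : Prop :=
  forall e : R, 0 < e -> exists N : nat, forall m n : nat,
    (N <= m)%N -> (N <= n)%N -> nsq (u m - u n) < e.

Definition is_hilbert : Prop :=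
  [/\ (forall (a : R[i]) (x y z : X), ip (a *: x + y) z = a * ip x z + ip y z),
      (forall x y : X, ip y x = (ip x y)^*),
      (forall x : X, 0 <= ip x x),
      (forall x : X, ip x x = 0 -> x = 0)
    & (forall u : nat -> X, cauchy u -> exists x : X, conv_to u x)].

Definition linrel (T : set (X * X)) : Prop :=
  [/\ T (0, 0),
      (forall p q, T p -> T q -> T (p.1 + q.1, p.2 + q.2))
    & (forall (a : R[i]) p, T p -> T (a *: p.1, a *: p.2))].

Definition closed_rel (T : set (X * X)) : Prop :=
  forall (u : nat -> X * X) (x y : X), (forall n, T (u n)) ->
    conv_to (fun n => (u n).1) x -> conv_to (fun n => (u n).2) y -> T (x, y).

Definition closed_linrel (T : set (X * X)) : Prop := linrel T /\ closed_rel T.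

Definition ip2 (p q : X * X) : R[i] := ip p.1 q.1 + ip p.2 q.2.

Definition dom (T : set (X * X)) : set X := [set x | exists y, T (x, y)].
Definition ker (T : set (X * X)) : set X := [set x | T (x, 0)].

Definition adj (T : set (X * X)) : set (X * X) :=
  [set fg | forall xy, T xy -> ip fg.2 xy.1 = ip fg.1 xy.2].

Definition rel_inf (T : set (X * X)) : set (X * X) :=
  [set p | T p /\ p.1 = 0].

(* T_s = T (-) T_oo, orthogonal complement of T_oo in T w.r.t. ip2 *)
Definition rel_s (T : set (X * X)) : set (X * X) :=
  [set p | T p /\ forall q, rel_inf T q -> ip2 p q = 0].

Definition dual_pair (A B : set (X * X)) : Prop :=
  closed_linrel A /\ closed_linrel B /\ A `<=` adj B.

Definition rel_comp (C T : set (X * X)) : set (X * X) :=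
  [set xz | exists y, T (xz.1, y) /\ C (y, xz.2)].

(* N(1 + T) = {g | (g, -g) in T} *)
Definition ker_one_plus (T : set (X * X)) : set X := [set g | T (g, - g)].

Definition rel_restrict (T : set (X * X)) (D : set X) : set (X * X) :=
  [set p | T p /\ D p.1].

(* orthogonality in X_{+A}: <f,g>_{+A} = <f,g> + <(A^* )_s f, (A^* )_s g> = 0 *)
Definition orth_plus (A : set (X * X)) (f g : X) : Prop :=
  forall f' g' : X, rel_s (adj A) (f, f') -> rel_s (adj A) (g, g') ->
    ip f g + ip f' g' = 0.

(* S = M (+)_A N : orthogonal sum in X_{+A} *)
Definition orth_sum_plus (A : set (X * X)) (S M N : set X) : Prop :=
  S `<=` dom (adj A) /\
  S = [set x | exists m n, M m /\ N n /\ x = m + n] /\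
  (forall m n, M m -> N n -> orth_plus A m n).

End Hilbert.

(* Main.v *)
Require Import Defs.
From mathcomp Require Import all_boot all_order all_algebra complex.
From mathcomp Require Import classical_sets reals boolp ring lra.
Set Implicit Arguments. Unset Strict Implicit. Unset Printing Implicit Defensive.
Import Order.TTheory GRing.Theory Num.Theory.
Local Open Scope ring_scope.
Local Open Scope classical_set_scope.

Lemma conjE (R : realType) (a b : R) : Num.conj (a +i* b)%C = (a +i* (- b))%C.
Proof. by []. Qed.

Lemma ReD (R : realType) (x y : R[i]) : complex.Re (x + y) = complex.Re x + complex.Re y.
Proof. by case: x; case: y. Qed.

Lemma ReN (R : realType) (x : R[i]) : complex.Re (- x) = - complex.Re x.
Proof. by case: x. Qed.

Lemma ReJ (R : realType) (x : R[i]) : complex.Re (Num.conj x) = complex.Re x.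
Proof. by case: x. Qed.

Lemma ReM_real (R : realType) (t : R) (x : R[i]) : complex.Re ((t%:C)%C * x) = t * complex.Re x.
Proof. case: x => a b /=. by rewrite mul0r subr0. Qed.

Lemma Re_ge0 (R : realType) (x : R[i]) : 0 <= x -> 0 <= complex.Re x /\ x = ((complex.Re x)%:C)%C.
Proof. case: x => a b; rewrite lecE /= => /andP[/eqP -> h]; by split. Qed.

Lemma Re_Ni (R : realType) (x : R[i]) : complex.Re (Num.conj 'i%C * x) = complex.Im x.
Proof. case: x => a b /=. by rewrite mul0r mulN1r sub0r opprK. Qed.

Section IP.
End IP.

Lemma ipD (R : realType) (V : lmodType R[i]) (q : V -> V -> R[i]) :
  is_hilbert q -> forall x y z, q (x + y) z = q x z + q y z.
Proof. case=> H1 _ _ _ _ x y z. by rewrite -[x]scale1r H1 mul1r scale1r. Qed.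

Lemma ip0 (R : realType) (V : lmodType R[i]) (q : V -> V -> R[i]) :
  is_hilbert q -> forall z, q 0 z = 0.
Proof. move=> H z. have := ipD H 0 0 z. rewrite addr0 => /(congr1 (fun t => t - q 0 z)). by rewrite addrK subrr => <-. Qed.

Lemma ipZ (R : realType) (V : lmodType R[i]) (q : V -> V -> R[i]) :
  is_hilbert q -> forall a x z, q (a *: x) z = a * q x z.
Proof. move=> H a x z. case: (H) => H1 _ _ _ _. by rewrite -[a *: x]addr0 H1 ip0 // addr0. Qed.

Lemma ipN (R : realType) (V : lmodType R[i]) (q : V -> V -> R[i]) :
  is_hilbert q -> forall x z, q (- x) z = - q x z.
Proof. move=> H x z. by rewrite -scaleN1r ipZ // mulN1r. Qed.

Lemma ipB (R : realType) (V : lmodType R[i]) (q : V -> V -> R[i]) :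
  is_hilbert q -> forall x y z, q (x - y) z = q x z - q y z.
Proof. move=> H x y z. by rewrite ipD // ipN. Qed.

Lemma ipC (R : realType) (V : lmodType R[i]) (q : V -> V -> R[i]) :
  is_hilbert q -> forall x y, q y x = Num.conj (q x y).
Proof. by case. Qed.

Lemma ipDr (R : realType) (V : lmodType R[i]) (q : V -> V -> R[i]) :
  is_hilbert q -> forall x y z, q z (x + y) = q z x + q z y.
Proof. move=> H x y z. by rewrite (ipC H (x+y) z) (ipC H x z) (ipC H y z) ipD // rmorphD. Qed.

Lemma ipNr (R : realType) (V : lmodType R[i]) (q : V -> V -> R[i]) :
  is_hilbert q -> forall x z, q z (- x) = - q z x.
Proof. move=> H x z. by rewrite (ipC H (-x) z) (ipC H x z) ipN // rmorphN. Qed.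

Lemma ipBr (R : realType) (V : lmodType R[i]) (q : V -> V -> R[i]) :
  is_hilbert q -> forall x y z, q z (x - y) = q z x - q z y.
Proof. move=> H x y z. by rewrite ipDr // ipNr. Qed.

Lemma ipZr (R : realType) (V : lmodType R[i]) (q : V -> V -> R[i]) :
  is_hilbert q -> forall a x z, q z (a *: x) = Num.conj a * q z x.
Proof. move=> H a x z. by rewrite (ipC H (a*:x) z) (ipC H x z) ipZ // rmorphM. Qed.

Lemma ip0r (R : realType) (V : lmodType R[i]) (q : V -> V -> R[i]) :
  is_hilbert q -> forall z, q z 0 = 0.
Proof. move=> H z. by rewrite (ipC H 0 z) ip0 // rmorph0. Qed.

Lemma nsq_ge0 (R : realType) (V : lmodType R[i]) (q : V -> V -> R[i]) :
  is_hilbert q -> forall x, 0 <= nsq q x.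
Proof. case=> _ _ H3 _ _ x. by case: (Re_ge0 (H3 x)). Qed.

Lemma ip_self (R : realType) (V : lmodType R[i]) (q : V -> V -> R[i]) :
  is_hilbert q -> forall x, q x x = ((nsq q x)%:C)%C.
Proof. case=> _ _ H3 _ _ x. by case: (Re_ge0 (H3 x)). Qed.

Lemma nsq_eq0 (R : realType) (V : lmodType R[i]) (q : V -> V -> R[i]) :
  is_hilbert q -> forall x, nsq q x = 0 -> x = 0.
Proof. move=> H x h. case: (H) => _ _ _ H4 _. apply: H4. by rewrite ip_self // h. Qed.

Lemma nsqD (R : realType) (V : lmodType R[i]) (q : V -> V -> R[i]) :
  is_hilbert q -> forall x y, nsq q (x + y) = nsq q x + nsq q y + 2 * complex.Re (q x y).
Proof.
move=> H x y. rewrite /nsq (ipD H x y) (ipDr H x y x) (ipDr H x y y).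
rewrite ReD ReD ReD (ipC H x y) ReJ. lra.
Qed.

Lemma nsqN (R : realType) (V : lmodType R[i]) (q : V -> V -> R[i]) :
  is_hilbert q -> forall x, nsq q (- x) = nsq q x.
Proof. move=> H x. by rewrite /nsq (ipN H) (ipNr H) opprK. Qed.

Lemma nsqB (R : realType) (V : lmodType R[i]) (q : V -> V -> R[i]) :
  is_hilbert q -> forall x y, nsq q (x - y) = nsq q x + nsq q y - 2 * complex.Re (q x y).
Proof.
move=> H x y. rewrite (nsqD H) (nsqN H) (ipNr H) ReN. lra.
Qed.

Lemma conj_real (R : realType) (t : R) : Num.conj ((t%:C)%C : R[i]) = (t%:C)%C.
Proof. exact: conjc_real. Qed.

Lemma ReZl (R : realType) (V : lmodType R[i]) (q : V -> V -> R[i]) :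
  is_hilbert q -> forall t x y, complex.Re (q ((t%:C)%C *: x) y) = t * complex.Re (q x y).
Proof. move=> H t x y. by rewrite (ipZ H) ReM_real. Qed.

Lemma ReZr (R : realType) (V : lmodType R[i]) (q : V -> V -> R[i]) :
  is_hilbert q -> forall t x y, complex.Re (q x ((t%:C)%C *: y)) = t * complex.Re (q x y).
Proof. move=> H t x y. by rewrite (ipZr H) conj_real ReM_real. Qed.

Lemma nsqZ (R : realType) (V : lmodType R[i]) (q : V -> V -> R[i]) :
  is_hilbert q -> forall t x, nsq q ((t%:C)%C *: x) = t ^+ 2 * nsq q x.
Proof. move=> H t x. by rewrite /nsq (ReZl H) (ReZr H) mulrA expr2. Qed.

Lemma Re_bound (R : realType) (V : lmodType R[i]) (q : V -> V -> R[i]) :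
  is_hilbert q -> forall t x y, 0 < t ->
  2 * complex.Re (q x y) <= t * nsq q x + nsq q y / t.
Proof.
move=> H t x y ht.
have := nsq_ge0 H ((t%:C)%C *: x - y). rewrite (nsqB H) (nsqZ H) (ReZl H) => h.
have h2 : t * (2 * complex.Re (q x y)) <= t * (t * nsq q x + nsq q y / t).
  rewrite mulrDr mulrA -expr2 mulrCA [t * (nsq q y / t)]mulrC divfK; [lra | by rewrite gt_eqF].
by rewrite ler_pM2l in h2.
Qed.

Lemma small_inv (R : realType) (e : R) : 0 < e -> exists N : nat, forall n : nat, (N <= n)%N -> 1 / (n.+1%:R) < e.
Proof.
move=> he. exists (Num.bound (1 / e)) => n hn.
have h0 : 0 <= 1 / e by rewrite divr_ge0 // ltW.
have h1 := archi_boundP h0.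
have h2 : (Num.bound (1/e))%:R <= (n.+1)%:R :> R by rewrite ler_nat; apply: leqW.
have hn0 : (0 : R) < n.+1%:R by rewrite ltr0n.
rewrite ltr_pdivrMr // mulrC -ltr_pdivrMr //. lra.
Qed.
Lemma orth_real (R : realType) (r K : R) : 0 <= K -> (forall t, 2 * t * r <= t ^+ 2 * K) -> r = 0.
Proof.
move=> hK h. have hK1 : K + 1 != 0 by rewrite gt_eqF //; lra.
have [t ht] : exists t, r = t * (K + 1) by exists (r / (K + 1)); rewrite divfK.
have h' := h t. rewrite ht in h' *.
have h3 : t ^+ 2 * (K + 2) <= 0 by nra.
have ht0 : t = 0 by nra. by rewrite ht0 mul0r.
Qed.

Lemma para (R : realType) (V : lmodType R[i]) (q : V -> V -> R[i]) :
  is_hilbert q -> forall a b, nsq q (a + b) + nsq q (a - b) = 2 * nsq q a + 2 * nsq q b.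
Proof. move=> H a b. rewrite (nsqD H) (nsqB H). lra. Qed.

Lemma two_mid (R : realType) (V : lmodType R[i]) (p x y : V) :
  (p - x) + (p - y) = ((2%:C)%C : R[i]) *: (p - ((2^-1 : R)%:C)%C *: (x + y)).
Proof.
rewrite scalerBr scalerA -(rmorphM (real_complex R)) mulfV ?pnatr_eq0 //.
rewrite rmorph1 scale1r (rmorph_nat (real_complex R)) scaler_nat mulr2n.
by rewrite opprD !addrA [p - x + p]addrAC.
Qed.

Lemma vec_diff (R : realType) (V : lmodType R[i]) (p x y : V) :
  (p - x) - (p - y) = y - x.
Proof. by rewrite opprB addrC addrA subrK. Qed.

Lemma proj_thm (R : realType) (V : lmodType R[i]) (q : V -> V -> R[i]) (S : set V) :
  is_hilbert q -> S 0 -> (forall x y, S x -> S y -> S (x + y)) ->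
  (forall a x, S x -> S (a *: x)) ->
  (forall u x, (forall n, S (u n)) -> conv_to q u x -> S x) ->
  forall p, exists s, S s /\ forall w, S w -> q (p - s) w = 0.
Proof.
move=> H S0 SD SZ Scl p.
set E := [set r | exists s, S s /\ r = nsq q (p - s)].
have hE : has_inf E.
  split; first by exists (nsq q (p - 0)); exists 0.
  exists 0 => r [s [_ ->]]. exact: nsq_ge0.
have [d dE] : exists d, d = inf E by eexists.
have dle : forall s, S s -> d <= nsq q (p - s).
  move=> s hs. rewrite dE. have := ge_inf hE.2. move=> /(_ (nsq q (p - s))). apply. by exists s.
have d0 : 0 <= d.
  rewrite dE. apply: lb_le_inf; first by case: hE.
  move=> r [s [_ ->]]. exact: nsq_ge0.
have happ : forall n : nat, exists s, S s /\ nsq q (p - s) < d + 1 / (n.+1%:R).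
  move=> n. have hpos : (0 : R) < 1 / (n.+1%:R) by rewrite divr_gt0 // ltr0n.
  have [r [s [hs ->]] hr] := inf_adherent hpos hE. rewrite -dE in hr. by exists s.
have [u hu] := choice happ.
have hcau : forall m n, nsq q (u m - u n) <= 2 / (n.+1%:R) + 2 / (m.+1%:R).
  move=> m n. have [hn1 hn2] := hu n. have [hm1 hm2] := hu m.
  have hmid : S (((2^-1 : R)%:C)%C *: (u n + u m)) by apply: SZ; apply: SD.
  have h4 := dle _ hmid.
  have hp := para H (p - u n) (p - u m).
  rewrite two_mid (nsqZ H) vec_diff in hp.
  rewrite div1r in hn2. rewrite div1r in hm2.
  have e1 : 2 ^+ 2 = 4 :> R by rewrite expr2; lra.
  rewrite e1 in hp. set X := n.+1%:R^-1 in hn2 *. set Y := m.+1%:R^-1 in hm2 *. lra.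
have hcauchy : cauchy q u.
  move=> e he. have [N hN] := @small_inv _ (e / 4) ltac:(lra). exists N => m n hm hn.
  have := hcau m n. have := hN m hm. have := hN n hn. 
  rewrite !div1r. set X := n.+1%:R^-1. set Y := m.+1%:R^-1. lra.
case: (H) => _ _ _ _ Hc. have [s hs] := Hc u hcauchy.
have Ss : S s by apply: (Scl u s) => // n; case: (hu n).
have hmin : nsq q (p - s) <= d.
  rewrite leNgt; apply/negP => hlt.
  have [g hgdef] : exists g, g = nsq q (p - s) - d by exists (nsq q (p - s) - d).
  have hg : 0 < g by rewrite hgdef subr_gt0.
  have [t htdef] : exists t, t = g / (3 * (d + 1)) by eexists.
  have hd1 : 0 < 3 * (d + 1) by lra.
  have ht : 0 < t by rewrite htdef divr_gt0.
  have ht3 : t * (d + 1) = g / 3.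
    rewrite htdef. field. by rewrite gt_eqF //; lra.
  have ht1 : 0 < 1 + t^-1 by rewrite addr_gt0 // invr_gt0.
  have he1 : 0 < g / 3 / (1 + t^-1) by rewrite !divr_gt0 //; lra.
  have [N1 hN1] := hs _ he1.
  have [N2 hN2] := @small_inv _ (g / 3) ltac:(lra).
  have h1 := hN1 (maxn N1 N2) (leq_maxl _ _).
  have h2 := hN2 (maxn N1 N2) (leq_maxr _ _).
  have [_ h3] := hu (maxn N1 N2).
  move: h1 h2 h3. set n := maxn N1 N2. set un := u n. move=> h1 h2 h3.
  have idv : p - s = (p - un) + (un - s) by rewrite addrA subrK.
  have hA := nsqD H (p - un) (un - s). rewrite -idv in hA.
  have hB := Re_bound H (p - un) (un - s) ht.
  have hX : 1 / (n.+1%:R) <= 1 :> R.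
    by rewrite ler_pdivrMr ?ltr0n // mul1r ler1n.
  move: hX h2 h3. set X := 1 / (n.+1%:R). move=> hX h2 h3.
  have hC : t * nsq q (p - un) <= g / 3.
    rewrite -ht3 ler_pM2l //. lra.
  have hD : nsq q (un - s) + nsq q (un - s) / t < g / 3.
    rewrite ltr_pdivlMr // in h1. rewrite mulrDr mulr1 in h1. exact: h1.
  lra.
have hre : forall w, S w -> complex.Re (q (p - s) w) = 0.
  move=> w hw. apply: (orth_real (nsq_ge0 H w)) => t.
  have := dle (s + ((t%:C)%C) *: w) (SD _ _ Ss (SZ _ _ hw)).
  rewrite opprD addrA (nsqB H) (nsqZ H) (ReZr H). lra.
exists s; split => // w hw.
have h1 := hre w hw.
have h2 := hre _ (SZ ('i%C) _ hw).
rewrite (ipZr H) Re_Ni in h2.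
move: h1 h2. case: (q (p - s) w) => a b /= -> ->. by [].
Qed.

Lemma nsq2E (R : realType) (X : lmodType R[i]) (ip : X -> X -> R[i]) (p : X * X) :
  nsq (ip2 ip) p = nsq ip p.1 + nsq ip p.2.
Proof. by rewrite /nsq /ip2 ReD. Qed.

Lemma hilbert2 (R : realType) (X : lmodType R[i]) (ip : X -> X -> R[i]) :
  is_hilbert ip -> is_hilbert (ip2 ip).
Proof.
move=> H. case: (H) => H1 H2 H3 H4 H5. split.
- move=> a x y z. rewrite /ip2 /= !H1. ring.
- move=> x y. by rewrite /ip2 (H2 x.1 y.1) (H2 x.2 y.2) rmorphD.
- move=> x. by rewrite /ip2 addr_ge0.
- move=> [x1 x2] /eqP. rewrite /ip2 /= paddr_eq0 //. case/andP => /eqP/H4 -> /eqP/H4 -> //.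
- move=> u hu.
  have hc1 : cauchy ip (fun n => (u n).1).
    move=> e he. have [N hN] := hu e he. exists N => m n hm hn.
    have := hN m n hm hn. rewrite nsq2E /=. have := nsq_ge0 H ((u m).2 - (u n).2). lra.
  have hc2 : cauchy ip (fun n => (u n).2).
    move=> e he. have [N hN] := hu e he. exists N => m n hm hn.
    have := hN m n hm hn. rewrite nsq2E /=. have := nsq_ge0 H ((u m).1 - (u n).1). lra.
  have [x hx] := H5 _ hc1. have [y hy] := H5 _ hc2.
  exists (x, y) => e he.
  have he2 : 0 < e / 2 by rewrite divr_gt0.
  have [N1 hN1] := hx _ he2. have [N2 hN2] := hy _ he2.
  exists (maxn N1 N2) => n hn. rewrite nsq2E /=.
  have := hN1 n (leq_trans (leq_maxl _ _) hn). have := hN2 n (leq_trans (leq_maxr _ _) hn).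
  lra.
Qed.

Lemma adj_sub (R : realType) (X : lmodType R[i]) (ip : X -> X -> R[i]) (T : set (X * X)) :
  is_hilbert ip -> forall a b c d, adj ip T (a, b) -> adj ip T (c, d) -> adj ip T (a - c, b - d).
Proof. move=> H a b c d h1 h2 [x y] hT /=. by rewrite (ipB H) (ipB H) (h1 _ hT) (h2 _ hT). Qed.

Lemma adj_add (R : realType) (X : lmodType R[i]) (ip : X -> X -> R[i]) (T : set (X * X)) :
  is_hilbert ip -> forall a b c d, adj ip T (a, b) -> adj ip T (c, d) -> adj ip T (a + c, b + d).
Proof. move=> H a b c d h1 h2 [x y] hT /=. by rewrite (ipD H) (ipD H) (h1 _ hT) (h2 _ hT). Qed.

Lemma adj_swap (R : realType) (X : lmodType R[i]) (ip : X -> X -> R[i]) (A B : set (X * X)) :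
  is_hilbert ip -> A `<=` adj ip B -> B `<=` adj ip A.
Proof.
move=> H hAB [f g] hB [x y] hA /=. have := hAB _ hA (f, g) hB. rewrite /= => e.
by rewrite (ipC H x g) (ipC H y f) e.
Qed.

Lemma side (R : realType) (X : lmodType R[i]) (ip : X -> X -> R[i]) (A B : set (X * X)) :
  is_hilbert ip -> closed_linrel ip B -> B `<=` adj ip A ->
  rel_restrict (rel_s ip (adj ip A)) (dom B) = rel_s ip B ->
  orth_sum_plus ip A (dom (adj ip A)) (dom B)
        (ker_one_plus (rel_comp (adj ip B) (adj ip A))).
Proof.
move=> H [[B0 BD BZ] Bcl] hBA hres.
have H2 := hilbert2 H.
have hproj := @proj_thm R (X * X)%type (ip2 ip) B H2 B0
  ltac:(by move=> [a b] [c d] h1 h2; exact: (BD (a, b) (c, d)))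
  ltac:(by move=> a [c d] h1; exact: (BZ a (c, d)))
  ltac:(move=> u x hu hc; case: x hc => x1 x2 hc; apply: (Bcl u) => // e he;
        have [N hN] := hc e he; exists N => n hn; have := hN n hn; rewrite nsq2E /=;
        [have := nsq_ge0 H ((u n).2 - x2) | have := nsq_ge0 H ((u n).1 - x1)]; lra).
split; first by [].
split.
- apply/seteqP; split => x /=.
  + move=> [g hg]. have [[b1 b2] [hb horth]] := hproj (x, g).
    exists b1, (x - b1). split; first by exists b2.
    split; last by rewrite addrC subrK.
    exists (g - b2). split.
    * exact: (adj_sub H hg (hBA _ hb)).
    * move=> [x' y'] hB' /=. have := horth _ hB'. rewrite /ip2 /= (ipN H) => e.
      apply/eqP. by rewrite eq_sym -subr_eq0 opprK addrC e.
  + move=> [m [n [[h hm] [[y [hy1 hy2]] ->]]]]. exists (h + y).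
    exact: (adj_add H (hBA _ hm) hy1).
- move=> m n [h hm] [y [hy1 hy2]] f' g' hf hg.
  have hmB : rel_s ip B (m, f') by rewrite -hres /rel_restrict /=; split => //; exists h.
  have e1 := hy2 _ hmB.1. rewrite /= in e1.
  have hinf : rel_inf (adj ip A) (0, y - g').
    split => //. have := adj_sub H hy1 hg.1. by rewrite subrr.
  have e2 := hf.2 _ hinf. rewrite /ip2 /= (ip0r H) add0r (ipBr H) in e2.
  have e3 : ip f' g' = ip f' y by apply/eqP; rewrite eq_sym -subr_eq0 e2.
  rewrite e3 (ipC H y f') -e1 (ipN H) (ipC H n m) -rmorphD subrr. exact: rmorph0.
Qed.

Lemma nonneg_opp0 (R : realType) (a b : R[i]) : 0 <= a -> 0 <= b -> - a = b -> a = 0.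
Proof.
move=> ha hb e. apply/eqP. rewrite eq_le ha andbT. by rewrite -oppr_ge0 e.
Qed.

Theorem lemma2p2 (R : realType) (X : lmodType R[i]) (ip : X -> X -> R[i])
  (A B : set (X * X)) :
  is_hilbert ip ->
  dual_pair ip A B ->
  rel_restrict (rel_s ip (adj ip A)) (dom B) = rel_s ip B ->
  rel_restrict (rel_s ip (adj ip B)) (dom A) = rel_s ip A ->
  [/\ orth_sum_plus ip A (dom (adj ip A)) (dom B)
        (ker_one_plus (rel_comp (adj ip B) (adj ip A))),
      orth_sum_plus ip B (dom (adj ip B)) (dom A)
        (ker_one_plus (rel_comp (adj ip A) (adj ip B)))
    & (adj ip A = B ->
        ker_one_plus (rel_comp (adj ip B) (adj ip A)) = [set 0] /\
        ker_one_plus (rel_comp (adj ip A) (adj ip B)) = [set 0])].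
Proof.
move=> H [hA [hB hAB]] h1 h2.
have hBA := adj_swap H hAB.
split.
- exact: side H hB hBA h1.
- exact: side H hA hAB h2.
- move=> e. have H3 : forall x, 0 <= ip x x by case: H.
  have H4 : forall x, ip x x = 0 -> x = 0 by case: H.
  have h00 : forall T : set (X * X), adj ip T (0, 0).
    by move=> T [x y] _ /=; rewrite !(ip0 H).
  split; apply/seteqP; split => g /=.
  + move=> [y [hy1 hy2]]. rewrite /= e in hy1.
    have := hy2 _ hy1. rewrite /= (ipN H) => e'. apply: H4.
    exact: (nonneg_opp0 (H3 g) (H3 y) e').
  + move=> ->. exists 0; split; rewrite /= ?oppr0; exact: h00.
  + move=> [y [hy1 hy2]]. rewrite /= e in hy2.
    have := hy1 _ hy2. rewrite /= (ipNr H) => e'. apply: H4.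
    exact: (nonneg_opp0 (H3 g) (H3 y) (esym e')).
  + move=> ->. exists 0; split; rewrite /= ?oppr0; exact: h00.
Qed.
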